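(* In every interval liminf game, positional strategies suffice: if a player (Eve or Adam) wins the game, then that player has a positional winning strategy.
   Context: A game graph is a tuple $G=(V,V_\exists,E,w,q_0)$ where $(V,E)$ is a finite directed graph in which every vertex has an outgoing edge, $w:E\to\mathbb{Z}$ is an integer edge-weight function, $V_\exists\subseteq V$ are Eve's vertices (the rest are Adam's), and $q_0\in V$ is the initial vertex. A play is an infinite path $v_0v_1\cdots$ with $v_0=q_0$. A strategy for a player maps finite play prefixes ending in one of that player's vertices to a successor vertex; it is positional (memoryless) if it depends only on the last vertex of the prefix. The liminf payoff of a play is $\liminf_{i\to\infty} w(v_i,v_{i+1})$. An interval liminf game is a pair $(G,I)$ with $I$ a finite union of real intervals; a play is winning for Eve iff its liminf payoff lies in $I$, and winning for Adam otherwise. A player wins the game if they have a strategy such that all plays consistent with it are winning for them. *)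

(* Defs.v *)
From HB Require Import structures.
From mathcomp Require Import all_boot all_order all_algebra.
From mathcomp Require Import all_classical all_reals.
From mathcomp Require Import topology sequences.

Set Implicit Arguments.
Unset Strict Implicit.
Unset Printing Implicit Defensive.

Import Order.TTheory GRing.Theory Num.Theory.

Record game_graph (V : finType) := GameGraph {
  eve_vertices : {set V};            (* V_E ; the rest belong to Adam *)
  edge : rel V;
  weight : V -> V -> int;             (* w, only meaningful on edges *)
  init : V;
  edge_total : forall v, exists u, edge v u
}.

Section Games.
Variables (V : finType) (G : game_graph V).

Inductive player := Eve | Adam.

Definition owns (p : player) (v : V) : bool :=
  match p with
  | Eve => v \in eve_vertices G
  | Adam => v \notin eve_vertices G
  end.

Definition is_play (v : nat -> V) : Prop :=
  v 0%N = init G /\ forall n, edge G (v n) (v n.+1).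

Definition prefix (v : nat -> V) (n : nat) : seq V := [seq v i | i <- iota 0 n.+1].

(* A strategy maps finite play prefixes (given as the full sequence
   q0 :: s of visited vertices) to a vertex. *)
Definition strategy := seq V -> V.

Definition valid_strategy (p : player) (sigma : strategy) : Prop :=
  forall s : seq V, path (edge G) (init G) s ->
    owns p (last (init G) s) ->
    edge G (last (init G) s) (sigma (init G :: s)).

Definition positional (f : V -> V) : strategy :=
  fun s => f (last (init G) s).

Definition consistent (p : player) (sigma : strategy) (v : nat -> V) : Prop :=
  forall n, owns p (v n) -> v n.+1 = sigma (prefix v n).

Definition liminf_payoff (R : realType) (v : nat -> V) : \bar R :=
  limn_einf (fun i => ((weight G (v i) (v i.+1))%:~R : R)%:E).

Definition in_union (R : realType) (I : seq (interval R)) (x : \bar R) : Prop :=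
  exists2 J, J \in I & (match x with EFin r => r \in J | _ => False end).

Definition winning_play (R : realType) (I : seq (interval R)) (p : player)
    (v : nat -> V) : Prop :=
  match p with
  | Eve => in_union I (liminf_payoff R v)
  | Adam => ~ in_union I (liminf_payoff R v)
  end.

Definition winning_strategy (R : realType) (I : seq (interval R)) (p : player)
    (sigma : strategy) : Prop :=
  valid_strategy p sigma /\
  forall v, is_play v -> consistent p sigma v -> winning_play I p v.

Definition wins (R : realType) (I : seq (interval R)) (p : player) : Prop :=
  exists sigma, winning_strategy I p sigma.

Definition wins_positionally (R : realType) (I : seq (interval R)) (p : player) : Prop :=
  exists f : V -> V, winning_strategy I p (positional f).

End Games.

(* Main.v *)
Require Import Defs.
From HB Require Import structures.
From mathcomp Require Import all_boot all_order all_algebra.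
From mathcomp Require Import all_classical all_reals.
From mathcomp Require Import ereal topology sequences.
Import Order.TTheory GRing.Theory Num.Theory.
Local Notation subsetP := mathcomp.boot.fintype.subsetP.
Set Implicit Arguments. Unset Strict Implicit. Unset Printing Implicit Defensive.
Section An.
Local Open Scope classical_set_scope.
Local Open Scope ereal_scope.
Variable R : realType.
Implicit Types u : (\bar R)^nat.

Lemma einfs_shift u k n : einfs (fun i => u (i + k)%N) n = einfs u (n + k)%N.
Proof.
rewrite /einfs /=; congr (ereal_inf _); rewrite /sdrop.
apply/seteqP; split => x /= [j hj <-].
  by exists (j + k)%N => //=; rewrite leq_add2r.
exists (j - k)%N => /=; first by rewrite leq_subRL ?(leq_trans _ hj) ?leq_addl // addnC.
by rewrite subnK // (leq_trans _ hj) // leq_addl.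
Qed.

Lemma limn_einf_shiftn u k : limn_einf (fun i => u (i + k)%N) = limn_einf u.
Proof.
rewrite !limn_einf_lim.
have h := ereal_nondecreasing_cvgn (nondecreasing_einfs u).
rewrite (cvg_lim _ h) //.
apply: cvg_lim => //.
have -> : einfs (fun i => u (i + k)%N) = [sequence einfs u (n + k)%N]_n.
  by apply/funext => n; rewrite einfs_shift.
by rewrite cvg_shiftn.
Qed.

Lemma limn_einf_const u (m : \bar R) : (forall n, m <= u n) ->
  (forall N, exists2 n, (N <= n)%N & u n = m) -> limn_einf u = m.
Proof.
move=> hge hinf; rewrite limn_einf_lim.
have -> : einfs u = fun _ => m.
  apply/funext => N; apply/eqP; rewrite eq_le; apply/andP; split.
    apply: ge_ereal_inf; have [n hn hu] := hinf N; exists m => //.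
    by exists n.
  by apply: le_ereal_inf_tmp => _ [n _ <-].
exact: lim_cst.
Qed.
End An.

Local Notation set0 := (@mathcomp.boot.finset.set0 _).

Section Attr.
Variables (V : finType) (G : game_graph V).
Variables (U : {set V}) (A : rel V) (p : player) (T0 : {set V}) (M : rel V).

Definition attrF (X : {set V}) : {set V} :=
  T0 :|: [set x in U | if owns G p x then [exists y, A x y && (M x y || (y \in X))]
                        else [forall y, A x y ==> (M x y || (y \in X))]].

Lemma attrF_mono : {homo attrF : X Y / X \subset Y}.
Proof.
move=> X Y /subsetP XY; apply/subsetP => x; rewrite !inE.
case/orP => [->//|/andP[xU h]]; apply/orP; right; rewrite xU /=.
case: (owns G p x) h.
  case/existsP => y /andP[axy h]; apply/existsP; exists y; rewrite axy /=.
  by case/orP: h => [->//|/XY ->]; rewrite orbT.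
move/forallP => h; apply/forallP => y; apply/implyP => axy.
by case/orP: (implyP (h y) axy) => [->//|/XY ->]; rewrite orbT.
Qed.

Definition attr := fixset attrF.

Definition attr_strat (d : V -> V) (x : V) : V :=
  odflt (d x) [pick y | A x y && (M x y || (y \in iter (fix_order attrF x).-1 attrF set0))].

Hypothesis T0U : T0 \subset U.

Lemma attr_fix : attrF attr = attr.
Proof. exact: (fixsetK attrF_mono). Qed.

Lemma attr_sub : attr \subset U.
Proof.
rewrite -attr_fix; apply/subsetP => x; rewrite !inE; case/orP => [/(subsetP T0U)//|].
by case/andP.
Qed.

Lemma T0_attr : T0 \subset attr.
Proof. by rewrite -attr_fix; apply/subsetP => x xT; rewrite !inE xT. Qed.

Lemma attr_out x : x \in U -> x \notin attr ->
  if owns G p x then forall y, A x y -> ~~ M x y && (y \notin attr)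
  else exists2 y, A x y & ~~ M x y && (y \notin attr).
Proof.
move=> xU; rewrite -{1}attr_fix !inE xU negb_or => /andP[_] /=.
case: (owns G p x).
  move=> /existsPn h y axy; move: (h y); by rewrite axy negb_or.
move=> /forallPn [y]; rewrite negb_imply => /andP[axy]; rewrite negb_or => h.
by exists y.
Qed.

Lemma attr_in x : x \in attr -> x \notin T0 ->
  if owns G p x then forall d, A x (attr_strat d x) && (M x (attr_strat d x) || (attr_strat d x \in attr))
  else forall y, A x y -> M x y || (y \in attr).
Proof.
move=> xA xT.
have := xA; rewrite -(in_iter_fix_orderE attrF) => xi.
have : 0 < fix_order attrF x by rewrite fix_order_gt0.
move: xi; rewrite /attr_strat; case: (fix_order attrF x) => // j /= xi _.
move: xi; rewrite !inE (negbTE xT) /= => /andP[xU].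
case: (owns G p x).
  move=> /existsP[y0 hy0] d.
  case: pickP => [y /andP[axy h]|/(_ y0)]; last by rewrite hy0.
  rewrite axy /=; case/orP: h => [->//|h]; apply/orP; right.
  exact: (subsetP (iter_sub_fix attrF_mono j)).
move=> /forallP h y axy; case/orP: (implyP (h y) axy) => [->//|hy].
by rewrite (subsetP (iter_sub_fix attrF_mono j)) ?orbT.
Qed.

Lemma attr_force d (v : nat -> V) : (forall n, A (v n) (v n.+1)) -> v 0 \in attr ->
  (forall n, owns G p (v n) -> v n \in attr -> v n \notin T0 -> v n.+1 = attr_strat d (v n)) ->
  exists n, (v n \in T0) || M (v n) (v n.+1).
Proof.
move=> hA h0 hc.
suff: forall k (v : nat -> V), (forall n, A (v n) (v n.+1)) -> v 0 \in attr ->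
  fix_order attrF (v 0) <= k ->
  (forall n, owns G p (v n) -> v n \in attr -> v n \notin T0 -> v n.+1 = attr_strat d (v n)) ->
  exists n, (v n \in T0) || M (v n) (v n.+1).
  by move=> /(_ _ v hA h0 (leqnn _) hc).
elim=> [|k IH] {hA h0 hc}v hA h0 hk hc.
  by move: hk; rewrite leqn0 -[_ == 0]negbK -lt0n fix_order_gt0 h0.
have [xT|xT] := boolP (v 0 \in T0); first by exists 0; rewrite xT.
have := h0; rewrite -(in_iter_fix_orderE attrF) => xi.
have : 0 < fix_order attrF (v 0) by rewrite fix_order_gt0.
move: xi hk; case E: (fix_order attrF (v 0)) => [//|j] /= xi hk _.
move: xi; rewrite !inE (negbTE xT) /= => /andP[xU hif].
have step : M (v 0) (v 1) || (v 1 \in iter j attrF set0).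
  move: hif; case Ho: (owns G p (v 0)).
    move=> /existsP[y0 hy0].
    rewrite (hc 0 Ho h0 xT) /attr_strat E /=.
    case: pickP => [y /andP[_ ->]//|/(_ y0)]; by rewrite hy0.
  by move=> /forallP /(_ (v 1)) /implyP h; exact: h (hA 0).
case/orP: step => [hM|hi]; first by exists 0; rewrite hM orbT.
have [n hn] := IH (fun n => v n.+1) (fun n => hA n.+1)
  (subsetP (iter_sub_fix attrF_mono j) _ hi)
  (leq_trans (fix_order_small attrF_mono hi) hk) (fun n => hc n.+1).
by exists n.+1.
Qed.

End Attr.
Section Solve.
Variables (R : realType) (V : finType) (G : game_graph V) (I : seq (interval R)).

Definition opp p := match p with Eve => Adam | Adam => Eve end.

Lemma owns_opp p x : owns G (opp p) x = ~~ owns G p x.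
Proof. by case: p => //=; rewrite negbK. Qed.

Lemma opp_opp p : opp (opp p) = p.
Proof. by case: p. Qed.

Lemma win_excl p v : winning_play G I p v -> winning_play G I (opp p) v -> False.
Proof. by case: p => /=. Qed.

Lemma wp_shift p v k : winning_play G I p (fun n => v (n + k)%N) <-> winning_play G I p v.
Proof.
have E : liminf_payoff G R (fun n => v (n + k)%N) = liminf_payoff G R v.
  rewrite /liminf_payoff -[RHS](limn_einf_shiftn _ k).
  by congr limn_einf; apply: boolp.funext => i /=; rewrite addSn.
by case: p => /=; rewrite E.
Qed.

Lemma lp_const v (m : int) : (forall n, m <= weight G (v n) (v n.+1))%R ->
  (forall N, exists2 n, (N <= n)%N & weight G (v n) (v n.+1) = m) ->
  liminf_payoff G R v = ((m%:~R : R)%:E)%E.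
Proof.
move=> h1 h2; apply: limn_einf_const => [n|N].
  by rewrite lee_fin ler_int.
by have [n hn e] := h2 N; exists n => //; rewrite e.
Qed.

Lemma min_edge (A : rel V) (e0 : V * V) : A e0.1 e0.2 ->
  exists2 e : V * V, A e.1 e.2 & forall e' : V * V, A e'.1 e'.2 ->
    (weight G e.1 e.2 <= weight G e'.1 e'.2)%R.
Proof.
move=> h.
case: (@arg_minP _ _ _ e0 (fun e : V * V => A e.1 e.2) (fun e => weight G e.1 e.2) h).
by move=> e he hmin; exists e.
Qed.

Definition dflt (A : rel V) (x : V) : V := odflt x [pick y | A x y].

Definition arena_ok (U : {set V}) (A : rel V) :=
  (forall x y, A x y -> (x \in U) && (y \in U)) /\ (forall x, x \in U -> exists y, A x y).

Lemma dfltP (U : {set V}) (A : rel V) x : arena_ok U A -> x \in U -> A x (dflt A x).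
Proof.
move=> [_ tot] xU; rewrite /dflt; case: pickP => [y //|h].
by have [y hy] := tot x xU; move: (h y); rewrite hy.
Qed.

Definition nedges (A : rel V) := #|[set e : V * V | A e.1 e.2]|.

Definition closedW (A : rel V) p (W : {set V}) (f : V -> V) :=
  forall x, x \in W -> (owns G p x -> f x \in W) /\ (~~ owns G p x -> forall y, A x y -> y \in W).

Definition good (U : {set V}) (A : rel V) p (W : {set V}) (f : V -> V) :=
  [/\ W \subset U,
      (forall x, x \in U -> owns G p x -> A x (f x)),
      closedW A p W f &
      (forall v : nat -> V, (forall n, A (v n) (v n.+1)) -> v 0 \in W ->
         (forall n, owns G p (v n) -> v n.+1 = f (v n)) -> winning_play G I p v)].

Definition solved (U : {set V}) (A : rel V) := forall q, exists (Wq Wr : {set V}) (fq fr : V -> V),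
  [/\ (forall x, x \in U -> (x \in Wq) || (x \in Wr)), good U A q Wq fq & good U A (opp q) Wr fr].

Lemma solved_of (U : {set V}) (A : rel V) q (Wq Wr : {set V}) (fq fr : V -> V) :
  (forall x, x \in U -> (x \in Wq) || (x \in Wr)) -> good U A q Wq fq -> good U A (opp q) Wr fr ->
  solved U A.
Proof.
move=> hc h1 h2 q'.
have [->|->] : q' = q \/ q' = opp q by case: (q); case: (q'); auto.
  by exists Wq, Wr, fq, fr.
exists Wr, Wq, fr, fq; rewrite opp_opp; split => // x /hc; by rewrite orbC.
Qed.

Lemma trap (A : rel V) p (W : {set V}) (f : V -> V) (v : nat -> V) : closedW A p W f -> (forall n, A (v n) (v n.+1)) -> v 0 \in W ->
  (forall n, owns G p (v n) -> v n.+1 = f (v n)) -> forall n, v n \in W.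
Proof.
move=> hW hA h0 hc; elim => // n IH.
have [h1 h2] := hW _ IH.
case Ho: (owns G p (v n)); first by rewrite (hc n Ho) h1.
by apply: h2 (hA n); rewrite Ho.
Qed.

Local Notation subUset := mathcomp.boot.finset.subUset.
Local Notation sub0set := mathcomp.boot.finset.sub0set.
Local Notation subset_trans := mathcomp.boot.fintype.subset_trans.

Lemma solved_empty (U : {set V}) (A : rel V) : (forall x, x \notin U) -> solved U A.
Proof.
move=> hU; apply: (@solved_of U A Eve set0 set0 id id).
- by move=> x xU; move: (hU x); rewrite xU.
- split; [exact: sub0set | by move=> x xU; move: (hU x); rewrite xU
         | by move=> x; rewrite inE | by move=> v _; rewrite inE].
- split; [exact: sub0set | by move=> x xU; move: (hU x); rewrite xU
         | by move=> x; rewrite inE | by move=> v _; rewrite inE].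
Qed.

Lemma nedges_lt (A A' : rel V) (e : V * V) : (forall x y, A' x y -> A x y) ->
  A e.1 e.2 -> ~~ A' e.1 e.2 -> nedges A' < nedges A.
Proof.
move=> sub he hne; apply: proper_card; apply/properP; split.
  by apply/subsetP => x; rewrite !inE; exact: sub.
by exists e; rewrite inE.
Qed.

Lemma step (U : {set V}) (A : rel V) : arena_ok U A ->
  (forall (U' : {set V}) (A' : rel V), nedges A' < nedges A -> arena_ok U' A' -> solved U' A') ->
  solved U A.
Proof.
move=> hok IH.
have [hE|[e0 he0]] : (forall e : V * V, ~~ A e.1 e.2) \/ exists e0 : V * V, A e0.1 e0.2.
  case: (boolp.pselect (exists e0 : V * V, A e0.1 e0.2)) => h; first by right.
  by left => e; apply/negP => he; apply: h; exists e.
  apply: solved_empty => x; apply/negP => xU; have [y hy] := hok.2 x xU.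
  by move: (hE (x, y)); rewrite hy.
have [em hem hmin] := min_edge he0.
pose m := weight G em.1 em.2.
have [q Hq] : exists q, forall v, liminf_payoff G R v = ((m%:~R : R)%:E)%E -> winning_play G I q v.
  case: (boolp.pselect (in_union I ((m%:~R : R)%:E)%E)) => h; [exists Eve | exists Adam] => v /= ->.
    by [].
  by [].
pose M : rel V := fun x y => A x y && (weight G x y == m).
pose d := dflt A.
have hd : forall x, x \in U -> A x (d x) by move=> x xU; exact: dfltP hok xU.
pose A1 := attr G U A q set0 M.
pose U' := U :\: A1.
pose A' : rel V := fun x y => [&& A x y, x \in U', y \in U' & ~~ M x y].
have A'A : forall x y, A' x y -> A x y by move=> x y /and4P[].
have ok' : arena_ok U' A'.
  split; first by move=> x y /and4P[_ -> ->].
  move=> x xU'; have := xU'; rewrite inE => /andP[xnA xU].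
  have := attr_out xU xnA; case: (owns G q x).
    have [y hy] := hok.2 x xU.
    move=> /(_ y hy) /andP[nM ynA]; exists y.
    by rewrite /A' hy xU' nM inE ynA (andP (hok.1 _ _ hy)).2.
  move=> [y hy /andP[nM ynA]]; exists y.
  by rewrite /A' hy xU' nM inE ynA (andP (hok.1 _ _ hy)).2.
have lt' : nedges A' < nedges A.
  apply: (nedges_lt A'A hem); apply/negP => /and4P[_ _ _].
  by rewrite /M hem eqxx.
have [Wq' [Wr' [fq' [fr' [hc' [sW1 val1 cl1 win1] [sW2 val2 cl2 win2]]]]]] := IH _ _ lt' ok' q.
case: (boolp.pselect (exists x, (x \in U') && (x \notin Wq'))) => [[x0 /andP[x0U' x0nW]]|hall].
  have x0W : x0 \in Wr' by move: (hc' x0 x0U'); rewrite (negbTE x0nW).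
  have U'U : U' \subset U by exact: subsetDl.
  have Wr'U : Wr' \subset U := subset_trans sW2 U'U.
  pose Mf : rel V := fun _ _ => false.
  pose B := attr G U A (opp q) Wr' Mf.
  have Wr'B : Wr' \subset B := T0_attr G U A (opp q) Wr' Mf.
  have BU : B \subset U := attr_sub G A (opp q) Mf Wr'U.
  pose U'' := U :\: B.
  pose A'' : rel V := fun x y => [&& A x y, x \in U'' & y \in U''].
  have A''A : forall x y, A'' x y -> A x y by move=> x y /and3P[].
  have outB : forall x y, x \in U'' -> ~~ owns G q x -> A x y -> y \in U''.
    move=> x y; rewrite inE => /andP[xnB xU] hno axy.
    have := attr_out xU xnB; rewrite owns_opp hno => /(_ y axy) /andP[_ ynB].
    by rewrite inE ynB (andP (hok.1 _ _ axy)).2.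
  have ok'' : arena_ok U'' A''.
    split; first by move=> x y /and3P[_ -> ->].
    move=> x xU''; have := xU''; rewrite inE => /andP[xnB xU].
    case Ho: (owns G q x).
      have := attr_out xU xnB; rewrite owns_opp Ho /=; case=> y hy ynB.
      by exists y; rewrite /A'' hy xU'' inE ynB (andP (hok.1 _ _ hy)).2.
    have [y hy] := hok.2 x xU; exists y.
    by rewrite /A'' hy xU'' (outB x y xU'' (negbT Ho) hy).
  have lt'' : nedges A'' < nedges A.
    have x0U : x0 \in U := subsetP U'U _ x0U'.
    have [y0 hy0] := hok.2 x0 x0U.
    apply: (@nedges_lt A A'' (x0, y0) A''A hy0); apply/negP => /and3P[_ + _].
    by rewrite inE (subsetP Wr'B _ x0W).
  have [Wq'' [Wr'' [fq'' [fr'' [hc'' [sW1'' val1'' cl1'' win1''] [sW2'' val2'' cl2'' win2'']]]]]] :=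
    IH _ _ lt'' ok'' q.
  have U''U : U'' \subset U by exact: subsetDl.
  have K : forall x y, x \in Wr' -> owns G q x -> A x y -> A' x y && (y \in Wr').
    move=> x y xW Ho axy.
    have xU' := subsetP sW2 _ xW; have := xU'; rewrite inE => /andP[xnA xU].
    have := attr_out xU xnA; rewrite Ho => /(_ y axy) /andP[nM ynA].
    have hA' : A' x y by rewrite /A' axy xU' nM inE ynA (andP (hok.1 _ _ axy)).2.
    rewrite hA' /=; apply: (cl2 x xW).2 => //; by rewrite owns_opp Ho.
  pose fq x := if x \in U'' then fq'' x else d x.
  pose fr x := if x \in Wr' then fr' x else if x \in B then attr_strat G U A (opp q) Wr' Mf d x else fr'' x.
  apply: (@solved_of U A q Wq'' (Wr'' :|: B) fq fr).
  - move=> x xU; case: (boolP (x \in B)) => xB; first by rewrite inE xB !orbT.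
    have xU'' : x \in U'' by rewrite inE xB xU.
    by rewrite mathcomp.boot.finset.in_setU; case/orP: (hc'' x xU'') => h; rewrite h ?orbT.
  - have clq : closedW A q Wq'' fq.
      move=> x xW; have xU'' := subsetP sW1'' _ xW; split.
        by move=> Ho; rewrite /fq xU''; exact: (cl1'' x xW).1 Ho.
      move=> hno y axy; have := (cl1'' x xW).2 hno y; apply.
      by rewrite /A'' axy xU'' (outB x y xU'' hno axy).
    split => //.
    + exact: subset_trans sW1'' U''U.
    + move=> x xU Ho; rewrite /fq; case: ifP => xU''; last exact: hd.
      exact: A''A (val1'' x xU'' Ho).
    move=> v hA h0 hc; have hin := trap clq hA h0 hc.
    have inU'' : forall n, v n \in U'' by move=> n; exact: subsetP sW1'' _ (hin n).
    apply: win1'' => //.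
      by move=> n; rewrite /A'' hA !inU''.
    by move=> n Ho; rewrite (hc n Ho) /fq inU''.
  - have clr : closedW A (opp q) (Wr'' :|: B) fr.
      move=> x; rewrite inE => hx.
      case: (boolP (x \in B)) => xB.
        case: (boolP (x \in Wr')) => xW'.
          split.
            move=> Ho; rewrite /fr xW' inE (subsetP Wr'B) ?orbT //.
            exact: (cl2 x xW').1 Ho.
          move=> hno y axy; rewrite owns_opp negbK in hno.
          by rewrite inE (subsetP Wr'B) ?orbT // (andP (K x y xW' hno axy)).2.
        have := attr_in xB xW'; case Ho: (owns G (opp q) x).
          move=> /(_ d) /andP[_ h]; split => // _.
          by rewrite /fr (negbTE xW') xB inE; apply/orP; right; exact: h.
        move=> h; split => // _ y axy.
        by rewrite inE; apply/orP; right; exact: (h y axy).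
      have xW'' : x \in Wr'' by case/orP: hx => //; rewrite (negbTE xB).
      have xW' : x \notin Wr' by apply: contra xB; exact: (subsetP Wr'B).
      have xU'' := subsetP sW2'' _ xW''.
      split.
        move=> Ho; rewrite /fr (negbTE xW') (negbTE xB) inE.
        by rewrite ((cl2'' x xW'').1 Ho).
      move=> hno y axy; rewrite inE; case: (boolP (y \in B)) => yB; first by rewrite orbT.
      have yU'' : y \in U'' by rewrite inE yB (andP (hok.1 _ _ axy)).2.
      by rewrite ((cl2'' x xW'').2 hno y) // /A'' axy xU'' yU''.
    split => //.
    + by rewrite subUset (subset_trans sW2'' U''U) BU.
    + move=> x xU Ho; rewrite /fr; case: ifP => xW'.
        exact: A'A (val2 x (subsetP sW2 _ xW') Ho).
      case: ifP => xB.
        by have := attr_in xB (negbT xW'); rewrite Ho => /(_ d) /andP[].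
      have xU'' : x \in U'' by rewrite inE xB xU.
      exact: A''A (val2'' x xU'' Ho).
    move=> v hA h0 hc; have hin := trap clr hA h0 hc.
    case: (boolp.pselect (exists n, v n \in B)) => [[n hn]|hnB].
      have [k] : exists k, (v (k + n) \in Wr') || Mf (v (k + n)) (v (k + n).+1).
        have := @attr_force _ G U A (opp q) Wr' Mf d (fun k => v (k + n)) (fun k => hA (k + n)).
        rewrite /= add0n => /(_ hn); apply.
        by move=> k Ho hk hW; rewrite /= addSn (hc _ Ho) /fr (negbTE hW) hk.
      rewrite /Mf orbF => hk.
      have stay : forall j, v (j + (k + n)) \in Wr'.
        elim => [//|j IHj]; rewrite addSn.
        case Ho: (owns G (opp q) (v (j + (k + n)))).
          by rewrite (hc _ Ho) /fr IHj; exact: (cl2 _ IHj).1 Ho.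
        have Ho' : owns G q (v (j + (k + n))) by move: Ho; rewrite owns_opp => /negbFE.
        exact: (andP (K _ _ IHj Ho' (hA _))).2.
      apply/(wp_shift _ _ (k + n)); apply: win2.
      + move=> j; rewrite /= addSn.
        case Ho: (owns G (opp q) (v (j + (k + n)))).
          rewrite (hc _ Ho) /fr stay; exact: val2 _ (subsetP sW2 _ (stay j)) Ho.
        have Ho' : owns G q (v (j + (k + n))) by move: Ho; rewrite owns_opp => /negbFE.
        exact: (andP (K _ _ (stay j) Ho' (hA _))).1.
      + by rewrite /= add0n.
      + by move=> j Ho; rewrite /= addSn (hc _ Ho) /fr stay.
    have inW : forall n, v n \in Wr''.
      move=> n; move: (hin n); rewrite inE => /orP[//|hB].
      by exfalso; apply: hnB; exists n.
    have nB : forall n, v n \notin B by move=> n; apply/negP => hB; apply: hnB; exists n.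
    have nW' : forall n, v n \notin Wr' by move=> n; apply: contra (nB n); exact: (subsetP Wr'B).
    apply: win2'' => //.
      by move=> n; rewrite /A'' hA !(subsetP sW2'' _ (inW _)).
    by move=> n Ho; rewrite (hc n Ho) /fr (negbTE (nW' n)) (negbTE (nB n)).

pose fq x := if x \in A1 then attr_strat G U A q set0 M d x else fq' x.
have valq : forall x, x \in U -> owns G q x -> A x (fq x).
  move=> x xU Ho; rewrite /fq; case: ifP => xA1.
    by have := attr_in xA1 (ltac:(by rewrite inE) : x \notin set0); rewrite Ho => /(_ d) /andP[].
  have xU' : x \in U' by rewrite inE xA1 xU.
  exact: A'A (val1 x xU' Ho).
apply: (@solved_of U A q U set0 fq d).
- by move=> x ->.
- split => //.
  + move=> x xU; split.
      by move=> Ho; exact: (andP (hok.1 _ _ (valq x xU Ho))).2.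
    by move=> _ y hy; exact: (andP (hok.1 _ _ hy)).2.
  move=> v hA h0 hc.
  case: (boolp.pselect (forall N, exists2 n, N <= n & M (v n) (v n.+1))) => [hinf|hfin].
    apply: Hq; apply: lp_const.
      by move=> n; exact: (hmin (v n, v n.+1) (hA n)).
    by move=> N; have [n hn /andP[_ /eqP hM]] := hinf N; exists n.
  have [N hN] : exists N, forall n, N <= n -> ~~ M (v n) (v n.+1).
    apply: boolp.contrapT => h; apply: hfin => N; apply: boolp.contrapT => hno.
    apply: h; exists N => n hn; apply/negP => hM; apply: hno; by exists n.
  have hnA : forall n, N <= n -> v n \notin A1.
    move=> n hn; apply/negP => hin.
    have [k] : exists k, (v (k + n) \in set0) || M (v (k + n)) (v (k + n).+1).
      have := @attr_force _ G U A q set0 M d (fun k => v (k + n)) (fun k => hA (k + n)).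
      rewrite /= add0n => /(_ hin); apply.
      by move=> k Ho hk _; rewrite /= addSn (hc _ Ho) /fq hk.
    rewrite inE /= => hk.
    by move: (hN (k + n) (leq_trans hn (leq_addl _ _))); rewrite hk.
  have inU : forall n, v n \in U by move=> n; exact: (andP (hok.1 _ _ (hA n))).1.
  apply/(wp_shift _ _ N); apply: win1.
  + move=> k; rewrite /= addSn /A' hA hN ?(leq_trans _ (leq_addl _ _)) //.
    by rewrite !inE !inU hnA ?hnA ?andbT // (leq_trans (leq_addl k N)).
  + rewrite /= add0n; apply: boolp.contrapT => h; apply: hall; exists (v N).
    by rewrite !inE hnA // inU; apply/negP.
  + move=> k Ho; rewrite /= addSn (hc _ Ho) /fq ifN //; apply: hnA; exact: leq_addl.
- split; [exact: sub0set | by move=> x xU _; exact: hd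
         | by move=> x; rewrite inE | by move=> v _; rewrite inE].
Qed.

Lemma solve_all n : forall (U : {set V}) (A : rel V), nedges A <= n -> arena_ok U A -> solved U A.
Proof.
elim: n => [|n IHn] U A hn hok; apply: step => // U' A' hlt hok'.
  by move: (leq_trans hlt hn).
by apply: IHn => //; rewrite -ltnS (leq_trans hlt hn).
Qed.

Lemma prefixS (v : nat -> V) n : Defs.prefix v n.+1 = rcons (Defs.prefix v n) (v n.+1).
Proof. by rewrite /Defs.prefix -addn1 iotaD map_cat cats1 add0n. Qed.

Lemma prefix_last (v : nat -> V) n : last (init G) (Defs.prefix v n) = v n.
Proof. by case: n => [//|n]; rewrite prefixS last_rcons. Qed.

Fixpoint tr (nxt : seq V -> V) n : seq V :=
  if n is n'.+1 then rcons (tr nxt n') (nxt (tr nxt n')) else [::].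

Lemma main_sec p : wins G I p -> wins_positionally G I p.
Proof.
move=> [sigma [hval hwin]].
pose UT : {set V} := ~: set0.
have iT : forall x, x \in UT by move=> x; rewrite !inE.
have hok : arena_ok UT (edge G).
  split; first by move=> x y _; rewrite !iT.
  by move=> x _; exact: edge_total.
have [Wp [Wr [fp [fr [hc [_ valp _ winp] [_ valr _ winr]]]]]] := solve_all (leqnn _) hok p.
case/orP: (hc (init G) (iT _)) => hi.
  exists fp; split.
    by move=> s _ Ho; rewrite /positional /=; exact: valp _ (iT _) Ho.
  move=> v [h0 hA] hcons; apply: winp => //; first by rewrite h0.
  by move=> n Ho; rewrite (hcons n Ho) /positional prefix_last.
exfalso.
pose nxt (s : seq V) := if owns G p (last (init G) s) then sigma (init G :: s)
                        else fr (last (init G) s).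
pose v n := last (init G) (tr nxt n).
have hpath : forall n, path (edge G) (init G) (tr nxt n).
  elim => [//|n IH]; rewrite /= rcons_path IH /= /nxt.
  case: ifP => Ho; first exact: hval.
  by apply: valr (iT _) _; rewrite owns_opp Ho.
have hstep : forall n, v n.+1 = nxt (tr nxt n) by move=> n; rewrite /v /= last_rcons.
have hpre : forall n, Defs.prefix v n = init G :: tr nxt n.
  elim => [//|n IH]; rewrite prefixS IH hstep /=; congr (_ :: _).
have hplay : is_play G v.
  split; first by [].
  move=> n; rewrite hstep; have := hpath n.+1; rewrite /= rcons_path => /andP[_].
  by [].
have w1 : winning_play G I p v.
  apply: hwin => // n Ho; rewrite hstep hpre /nxt -/(v n) Ho.
  by [].
have w2 : winning_play G I (opp p) v.
  apply: winr => //; first exact: hplay.2.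
  move=> n; rewrite owns_opp => Ho; rewrite hstep /nxt -/(v n) (negbTE Ho).
  by [].
exact: win_excl w1 w2.
Qed.

End Solve.

Theorem mainTheorem2 (R : realType) (V : finType) (G : game_graph V)
    (I : seq (interval R)) (p : player) :
  wins G I p -> wins_positionally G I p.
Proof. exact: main_sec. Qed.
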